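(* Let $G$ act $(\kappa,N)$-acylindrically by isometries on a $\delta$-hyperbolic geodesic space $X$, $\kappa\ge\delta>0$. Let $\alpha\ge3\delta$. Let $U\subset G$ be a finite symmetric subset containing a loxodromic element $g$ with $\|g\|^\infty>10^3\delta$, and let $p\in X$. Put $$b_0=\frac{2}{\|g\|^\infty}\left[\Delta(g)+5L(U,p)+104\delta+\alpha\right].$$ Then for every integer $b\ge b_0$ the set $S=\{ug^bu^{-1}:u\in U(g)\}$ satisfies: $S\subset U^{b+2}$; $|S|=|U(g)|$; and $S$ is $\alpha$-reduced at $p$.
   Context: Hyperbolicity: $(x,z)_t\ge\min\{(x,y)_t,(y,z)_t\}-\delta$, $(x,y)_z=\frac12(|x-z|+|y-z|-|x-y|)$. $(\kappa,N)$-acylindrical: for all $x,y$ with $|x-y|\ge\kappa$, at most $N$ elements $u$ satisfy $|ux-x|\le100\delta$ and $|uy-y|\le100\delta$. $\|g\|=\inf_x|gx-x|$, $\|g\|^\infty=\lim_n\frac1n|g^nx-x|$. $A_g=\{x:|gx-x|\le\|g\|+8\delta\}$. $E(g)$ is the stabiliser of the two-point limit set of $\langle g\rangle$; $u\sim_g v$ iff $u^{-1}v\in E(g)$; $U(g)$ is a set of representatives of $\sim_g$-classes in $U$. $\Delta(g)=\sup\{\operatorname{diam}(uA_g^{+20\delta}\cap vA_g^{+20\delta}):u\not\sim_g v\}$. $L(U,p)=\max_{u\in U}|up-p|$. $U$ finite is $\alpha$-reduced at $p$ if $U\cap U^{-1}=\varnothing$ and for distinct $u_1,u_2\in U\sqcup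 U^{-1}$, $(u_1p,u_2p)_p<\frac12\min\{|u_1p-p|,|u_2p-p|\}-\alpha-50\delta$. *)

(* Defs.v *)
From HB Require Import structures.
From mathcomp Require Import all_boot all_order all_algebra.
From mathcomp Require Import all_classical all_reals.
From mathcomp Require Import ereal topology normedtype sequences.

Set Implicit Arguments.
Unset Strict Implicit.
Unset Printing Implicit Defensive.

Import Order.TTheory GRing.Theory Num.Theory numFieldNormedType.Exports.
Local Open Scope classical_set_scope.
Local Open Scope ring_scope.
Local Open Scope ereal_dual_scope. Local Close Scope ereal_dual_scope.

Section HypDefs.
Context {R : realType} {X : Type} (d : X -> X -> R).

Definition gprod (x y z : X) : R := (d x z + d y z - d x y) / 2.

Definition is_metric : Prop :=
  [/\ forall x, d x x = 0, forall x y, d x y = 0 -> x = y,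
      forall x y, d x y = d y x
    & forall x y z, d x z <= d x y + d y z].

Definition geodesic_space : Prop :=
  forall x y : X, exists gam : R -> X,
    [/\ gam 0 = x, gam (d x y) = y &
        forall s t, 0 <= s <= d x y -> 0 <= t <= d x y ->
          d (gam s) (gam t) = `|s - t|].

Definition hyperbolic (delta : R) : Prop :=
  forall x y z t : X,
    gprod x z t >= Num.min (gprod x y t) (gprod y z t) - delta.

Definition nbhd (A : set X) (r : R) : set X :=
  [set x | exists2 y, A y & d x y <= r].

(* diameter in extended reals, with the convention diam(empty) = 0 *)
Definition diam (S : set X) : \bar R :=
  ereal_sup ([set 0%E] `|` [set r | exists x y, [/\ S x, S y & r = (d x y)%:E]]).

(* two sequences converge to the same point of the Gromov boundary *)
Definition same_bdry (x y : nat -> X) : Prop :=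
  forall (o : X) (M : R), exists K : nat,
    forall n m : nat, (K <= n)%N -> (K <= m)%N -> M <= gprod (x n) (y m) o.

Context {G : groupType} (act : G -> X -> X).

Definition isometric_action : Prop :=
  [/\ forall x, act 1%g x = x,
      forall (g h : G) x, act (g * h)%g x = act g (act h x)
    & forall (g : G) x y, d (act g x) (act g y) = d x y].

Definition acylindrical (delta kappa : R) (N : nat) : Prop :=
  forall x y : X, kappa <= d x y ->
    forall s : seq G, uniq s ->
      (forall u, u \in s -> d (act u x) x <= 100 * delta /\ d (act u y) y <= 100 * delta) ->
      (size s <= N)%N.

Definition transl_len (g : G) : R := inf [set d (act g x) x | x in [set: X]].

Definition stable_len (g : G) (x : X) : R :=
  limn (fun n : nat => d (act (g ^+ n)%g x) x / n%:R).

Definition loxodromic (g : G) : Prop := forall x : X, 0 < stable_len g x.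

Definition axis (delta : R) (g : G) : set X :=
  [set x | d (act g x) x <= transl_len g + 8 * delta].

(* E(g): stabiliser of the two-point limit set {g^{+oo}, g^{-oo}} of <g>,
   boundary points being represented by the sequences g^n x and g^{-n} x *)
Definition elem_sub (g : G) : set G :=
  [set u | forall x : X,
    let pos := fun n : nat => act (g ^+ n)%g x in
    let neg := fun n : nat => act ((g^-1) ^+ n)%g x in
    (same_bdry (fun n => act u (pos n)) pos \/ same_bdry (fun n => act u (pos n)) neg) /\
    (same_bdry (fun n => act u (neg n)) pos \/ same_bdry (fun n => act u (neg n)) neg)].

Definition equiv_g (g u v : G) : Prop := elem_sub g (u^-1 * v)%g.

Definition reps_of (g : G) (U U' : set G) : Prop :=
  [/\ U' `<=` U,
      forall u, U u -> exists2 v, U' v & equiv_g g u v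
    & forall v w, U' v -> U' w -> equiv_g g v w -> v = w].

(* Delta(g) = sup { diam(u A_g^{+20d} cap v A_g^{+20d}) : u not~_g v } (sup of empty = 0) *)
Definition Delta (delta : R) (g : G) : \bar R :=
  ereal_sup ([set 0%E] `|` [set r | exists u v : G, [/\ ~ equiv_g g u v &
     r = diam (act u @` nbhd (axis delta g) (20 * delta)
               `&` act v @` nbhd (axis delta g) (20 * delta))]]).

Definition Lmax (U : set G) (p : X) : R := sup [set d (act u p) p | u in U].

Definition symmetric_set (U : set G) : Prop := forall u, U u -> U (u^-1)%g.

Fixpoint spow (U : set G) (n : nat) : set G :=
  match n with
  | 0 => [set 1%g]
  | n'.+1 => [set z | exists x y, [/\ spow U n' x, U y & z = (x * y)%g]]
  end.

Definition reduced (delta alpha : R) (p : X) (S : set G) : Prop :=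
  [/\ finite_set S,
      S `&` [set u | S (u^-1)%g] = set0
    & forall u1 u2 : G,
        (S `|` [set u | S (u^-1)%g]) u1 -> (S `|` [set u | S (u^-1)%g]) u2 -> u1 <> u2 ->
        gprod (act u1 p) (act u2 p) p <
          Num.min (d (act u1 p) p) (d (act u2 p) p) / 2 - alpha - 50 * delta].

End HypDefs.

(* Main.v *)
Require Import Defs.
From HB Require Import structures.
From mathcomp Require Import all_boot all_order all_algebra.
From mathcomp Require Import all_classical all_reals.
From mathcomp Require Import ereal topology normedtype sequences.
From mathcomp Require Import ring lra.
Import Order.TTheory GRing.Theory Num.Theory numFieldNormedType.Exports.
Local Open Scope classical_set_scope.
Local Open Scope ring_scope.
Set Implicit Arguments. Unset Strict Implicit.

Section Basics.
Context {R : realType} {X : Type} (d : X -> X -> R) (Hmet : is_metric d).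

Lemma d0 x : d x x = 0. Proof. by case: Hmet. Qed.
Lemma dC x y : d x y = d y x. Proof. by case: Hmet. Qed.
Lemma dtri x y z : d x z <= d x y + d y z. Proof. by case: Hmet. Qed.
Lemma dge0 x y : 0 <= d x y.
Proof. have := dtri x y x; rewrite d0 (dC y x); lra. Qed.

Lemma gpC x y z : gprod d x y z = gprod d y x z.
Proof. by rewrite /gprod (dC x y); congr (_ / _); lra. Qed.
Lemma gp_id x y z : gprod d y z x + gprod d x z y = d x y.
Proof. rewrite /gprod (dC y x) (dC z x) (dC z y); lra. Qed.
Lemma gp_ge0 x y z : 0 <= gprod d x y z.
Proof. rewrite /gprod; have := dtri x z y; rewrite (dC z y); lra. Qed.
Lemma gp_le x y z : gprod d x y z <= d x z.
Proof. rewrite /gprod; have := dtri y x z; rewrite (dC y x); lra. Qed.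
Lemma gp_lipl x x' y z : gprod d x y z <= gprod d x' y z + d x x'.
Proof.
rewrite /gprod; have := dtri x x' z; have := dtri x' x y.
rewrite (dC x' x); lra.
Qed.
Lemma gp_lipz x y z z' : gprod d x y z <= gprod d x y z' + d z z'.
Proof.
rewrite /gprod; have := dtri x z' z; have := dtri y z' z.
rewrite (dC z' z); lra.
Qed.
Lemma gp_same x z : gprod d x x z = d x z.
Proof. rewrite /gprod d0; lra. Qed.

Variable delta : R.
Hypothesis Hhyp : hyperbolic d delta.
Hypothesis Hd0 : 0 <= delta.

Lemma hyp2 x y z t c : c <= gprod d x y t -> c <= gprod d y z t ->
  c - delta <= gprod d x z t.
Proof.
move=> h1 h2; have := Hhyp x y z t.
have : c <= Num.min (gprod d x y t) (gprod d y z t) by rewrite le_min h1 h2.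
lra.
Qed.

Lemma hyp3 x y z w t c : c <= gprod d x y t -> c <= gprod d y z t ->
  c <= gprod d z w t -> c - 2 * delta <= gprod d x w t.
Proof.
move=> h1 h2 h3.
have h := hyp2 h1 h2.
have hd := Hd0.
have h' : c - delta <= gprod d z w t by lra.
have h4 := hyp2 h h'; lra.
Qed.

End Basics.

Section Fekete.
Context {R : realType} (a : nat -> R).
Hypothesis a_ge0 : forall n, 0 <= a n.
Hypothesis a_sub : forall n m, a (n + m) <= a n + a m.
Hypothesis a_0 : a 0%N = 0.

Let f n := a n / n%:R.
Let E := [set f n | n in [set n | (0 < n)%N]].

Lemma a_mul q N : a (q * N) <= q%:R * a N.
Proof.
elim: q => [|q IH]; first by rewrite mul0n mul0r a_0.
rewrite mulSn; have := a_sub N (q * N); rewrite -natr1; lra.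
Qed.

Lemma a_le1 r : a r <= r%:R * a 1.
Proof. by have := a_mul r 1; rewrite muln1. Qed.

Lemma E_lb : has_lbound E.
Proof.
exists 0 => _ [n _ <-]; rewrite /f divr_ge0 //.
Qed.

Lemma E_n0 : E !=set0.
Proof. by exists (f 1); exists 1%N. Qed.

Lemma fekete_cvg : f n @[n --> \oo] --> inf E.
Proof.
apply/cvgrPdist_le => e e0.
have [y [N N0 <-] fN] : exists2 y, E y & y < inf E + e / 2.
  by apply: inf_lt; [exact: E_n0 | lra].
have Nr : (0 < N%:R :> R) by rewrite ltr0n.
have a1 := a_ge0 1.
near=> n.
have n0 : (0 < n)%N by near: n; exact: nbhs_infty_ge.
have nbig : N%:R * a 1 / (e / 2) <= n%:R by near: n; exact: nbhs_infty_ger.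
have nr : (0 < n%:R :> R) by rewrite ltr0n.
have lb : inf E <= f n by apply: ge_inf; [exact: E_lb | exists n].
suff ub : f n <= inf E + e by rewrite ler_norml; apply/andP; split; lra.
have dn := divn_eq n N.
set q := (n %/ N)%N in dn; set r := (n %% N)%N in dn.
have rN : (r < N)%N by rewrite ltn_mod.
have qN : (q * N <= n)%N by rewrite /q leq_divM.
have h1 : a n <= q%:R * a N + r%:R * a 1.
  rewrite dn; have := a_sub (q * N) r; have := a_mul q N; have := a_le1 r; lra.
have hqN : q%:R * a N <= n%:R * f N.
  rewrite /f; have -> : q%:R * a N = (q * N)%:R * (a N / N%:R).
    by rewrite natrM -mulrA (mulrC N%:R) -mulrA mulVf ?mulr1 // gt_eqF.
  apply: ler_wpM2r; first by rewrite divr_ge0.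
  by rewrite ler_nat.
have hr : r%:R * a 1 <= N%:R * a 1 by apply: ler_wpM2r => //; rewrite ler_nat ltnW.
have h2 : a n <= n%:R * f N + N%:R * a 1 by lra.
have h3 : N%:R * a 1 <= n%:R * (e / 2).
  by rewrite -ler_pdivrMr; [lra|lra].
have h4 : a n <= n%:R * (inf E + e) by nra.
rewrite /f ler_pdivrMr //; lra.
Unshelve. all: by end_near.
Qed.

Lemma fekete n : (0 < n)%N -> limn f * n%:R <= a n.
Proof.
move=> n0; rewrite (cvg_lim _ fekete_cvg) //.
have : inf E <= f n by apply: ge_inf; [exact: E_lb | exists n].
have nr : (0 < n%:R :> R) by rewrite ltr0n.
rewrite /f ler_pdivlMr //.
Qed.

End Fekete.

Lemma archi_le {R : realType} (y z c : R) :
  (forall k : nat, (0 < k)%N -> y <= z + c / k%:R) -> y <= z.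
Proof.
move=> H; rewrite leNgt; apply/negP => yz.
have c0 : 0 <= c by have := H 1%N isT; rewrite divr1; lra.
set k := (Num.trunc (c / (y - z))).+1.
have hk := truncnS_gt (c / (y - z)); rewrite -/k in hk.
have k0 : (0 < k%:R :> R) by rewrite ltr0n.
have := H k isT.
have : c / k%:R < y - z.
  by rewrite ltr_pdivrMr // mulrC -ltr_pdivrMr ?subr_gt0.
lra.
Qed.

Section Action.
Context {R : realType} {X : Type} (d : X -> X -> R) (Hmet : is_metric d).
Context {G : groupType} (act : G -> X -> X) (Hact : isometric_action d act).

Lemma act1 x : act 1%g x = x. Proof. by case: Hact. Qed.
Lemma actM g h x : act (g * h)%g x = act g (act h x). Proof. by case: Hact. Qed.
Lemma dact g x y : d (act g x) (act g y) = d x y. Proof. by case: Hact. Qed.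
Lemma actK g x : act g^-1 (act g x) = x.
Proof. by rewrite -actM mulVg act1. Qed.
Lemma actVK g x : act g (act g^-1 x) = x.
Proof. by rewrite -actM mulgV act1. Qed.
Lemma gp_act g x y z : gprod d (act g x) (act g y) (act g z) = gprod d x y z.
Proof. by rewrite /gprod !dact. Qed.
Lemma dactV g x : d (act g^-1 x) x = d (act g x) x.
Proof. by rewrite -(dact g) actVK dC. Qed.
Lemma actX g n x : act (g ^+ n.+1)%g x = act g (act (g ^+ n)%g x).
Proof. by rewrite expgS actM. Qed.
Lemma actXD g n m x : act (g ^+ (n + m))%g x = act (g ^+ n)%g (act (g ^+ m)%g x).
Proof. by rewrite expgnDr actM. Qed.

Lemma disp_sub g x n m :
  d (act (g ^+ (n + m))%g x) x <= d (act (g ^+ n)%g x) x + d (act (g ^+ m)%g x) x.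
Proof.
rewrite actXD; have := dtri Hmet (act (g ^+ n)%g (act (g ^+ m)%g x)) (act (g ^+ n)%g x) x.
by rewrite dact addrC.
Qed.

Lemma disp_mul g x k n :
  d (act (g ^+ (k * n))%g x) x <= k%:R * d (act (g ^+ n)%g x) x.
Proof.
elim: k => [|k IH]; first by rewrite mul0n mul0r expg0 act1 d0.
rewrite mulSn; have := disp_sub g x n (k * n); rewrite -natr1; lra.
Qed.

Lemma disp_move g x y :
  d (act g x) x <= d (act g y) y + 2 * d x y.
Proof.
have := dtri Hmet (act g x) (act g y) x; have := dtri Hmet (act g y) y x.
rewrite dact (dC Hmet y x); lra.
Qed.

Lemma stable_lb g p x n : (0 < n)%N ->
  stable_len d act g p * n%:R <= d (act (g ^+ n)%g x) x.
Proof.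
move=> n0.
pose a m := d (act (g ^+ m)%g p) p.
have hF : forall m, (0 < m)%N -> stable_len d act g p * m%:R <= a m.
  move=> m m0; apply: (fekete (a := a)) => //.
  - by move=> k; exact: dge0.
  - by move=> k l; exact: disp_sub.
  - by rewrite /a expg0 act1 d0.
set T := stable_len d act g p.
apply: (@archi_le _ _ _ (2 * d p x)) => k k0.
have kr : (0 < k%:R :> R) by rewrite ltr0n.
have h1 : T * (k * n)%N%:R <= a (k * n)%N by apply: hF; rewrite muln_gt0 k0 n0.
have h2 : a (k * n)%N <= d (act (g ^+ (k * n))%g x) x + 2 * d p x.
  by apply: disp_move.
have h3 := disp_mul g x k n.
have h4 : T * (k * n)%:R <= k%:R * d (act (g ^+ n)%g x) x + 2 * d p x.
  lra.
rewrite natrM in h4.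
rewrite -(ler_pM2l kr) mulrDr.
have -> : k%:R * (2 * d p x / k%:R) = 2 * d p x by field; rewrite gt_eqF.
nra.
Qed.

End Action.


Section Chain.
Context {R : realType} {X : Type} (d : X -> X -> R) (Hmet : is_metric d).
Context {G : groupType} (act : G -> X -> X) (Hact : isometric_action d act).
Variable delta : R.
Hypothesis Hhyp : hyperbolic d delta.
Hypothesis Hd0 : 0 <= delta.

Local Notation gp := (gprod d).

Lemma hyp_small x y z t s : gp x z t <= s -> s + delta < gp x y t ->
  gp y z t <= s + delta.
Proof.
move=> h1 h2; rewrite leNgt; apply/negP => h3.
have := Hhyp x y z t.
have : s + delta < Num.min (gp x y t) (gp y z t) by rewrite lt_min h2 h3.
lra.
Qed.

Lemma hyp_or x y z t s : gp x z t <= s -> gp x y t <= s + delta \/ gp y z t <= s + delta.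
Proof.
move=> h1; case: (lerP (gp x y t) (s + delta)) => h2; first by left.
by right; apply: (hyp_small h1 h2).
Qed.

Lemma gp_base0 x y : gp x y x = 0.
Proof. by rewrite /gprod d0 // (dC Hmet y x); lra. Qed.

Lemma gp_lb x y z : d x z - d x y <= gp x y z.
Proof. rewrite /gprod; have := dtri Hmet x y z; have := dtri Hmet y x z; rewrite (dC Hmet y x); lra. Qed.

Lemma actXK h n y : act ((h^-1) ^+ n)%g (act (h ^+ n)%g y) = y.
Proof. by rewrite expVgn (actK Hact). Qed.
Lemma actXVK h n y : act (h ^+ n)%g (act ((h^-1) ^+ n)%g y) = y.
Proof. by rewrite expVgn (actVK Hact). Qed.
Lemma actXr h n y : act (h ^+ n.+1)%g y = act (h ^+ n)%g (act h y).
Proof. by rewrite expgSr (actM Hact). Qed.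

Variables (gam : G) (A : R) (x : X).
Hypothesis HA : gp (act gam^-1 x) (act gam x) x <= A.
Hypothesis Ha : 2 * A + 3 * delta < d (act gam x) x.

Let xn n := act (gam ^+ n)%g x.

Lemma chain_step n : gp (xn n) (xn n.+2) (xn n.+1) <= A.
Proof.
have := HA; rewrite /xn -(gp_act Hact (gam ^+ n.+1)%g).
by rewrite actXr (actVK Hact) -actXr.
Qed.

Lemma chain_d n : d (xn n) (xn n.+1) = d (act gam x) x.
Proof. by rewrite /xn actXr (dact Hact) dC. Qed.

Lemma L1 m : gp x (xn m.+2) (xn m.+1) <= A + delta.
Proof.
have A0 : 0 <= A by have := HA; have := gp_ge0 Hmet (act gam^-1 x) (act gam x) x; lra.
elim: m => [|m IH].
  have := Hd0; have := chain_step 0; rewrite /xn expg0 (act1 Hact) //; lra.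
have h1 := chain_step m.+1.
have hid := gp_id Hmet (xn m.+1) (xn m.+2) x.
have hd := chain_d m.+1.
have h2 : A + delta < gp (xn m.+1) x (xn m.+2).
  have := Ha; have := Hd0; rewrite (gpC Hmet (xn m.+2)) in hid.
  move: IH hid hd; rewrite /xn; lra.
have := hyp_small h1 h2; lra.
Qed.

End Chain.

Section Chain2.
Context {R : realType} {X : Type} (d : X -> X -> R) (Hmet : is_metric d).
Context {G : groupType} (act : G -> X -> X) (Hact : isometric_action d act).
Variable delta : R.
Hypothesis Hhyp : hyperbolic d delta.
Hypothesis Hd0 : 0 <= delta.
Local Notation gp := (gprod d).

Variables (gam : G) (A : R) (x : X).
Hypothesis HA : gp (act gam^-1 x) (act gam x) x <= A.
Hypothesis Ha : 2 * A + 3 * delta < d (act gam x) x.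

Lemma HAV : gp (act (gam^-1)^-1 x) (act gam^-1 x) x <= A.
Proof. by rewrite invgK gpC. Qed.
Lemma HaV : 2 * A + 3 * delta < d (act gam^-1 x) x.
Proof. by rewrite (dactV Hmet Hact). Qed.

Lemma L2 i j : gp (act ((gam^-1) ^+ i)%g x) (act (gam ^+ j)%g x) x <= A + 2 * delta.
Proof.
have A0 : 0 <= A by have := HA; have := gp_ge0 Hmet (act gam^-1 x) (act gam x) x; lra.
have hd := Hd0.
case: i => [|i]; first by rewrite expg0 (act1 Hact) gp_base0 //; lra.
case: j => [|j]; first by rewrite expg0 (act1 Hact) gpC // gp_base0 //; lra.
have ha : gp (act ((gam^-1) ^+ i.+1)%g x) (act gam x) x <= A + delta.
  rewrite -(gp_act Hact (gam ^+ i.+1)%g) (actXVK Hact) -(actXr Hact).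
  exact: (L1 Hmet Hact Hhyp Hd0 HA Ha i).
have hb : A + 2 * delta < gp (act gam x) (act (gam ^+ j.+1)%g x) x.
  case: j => [|j].
    rewrite expg1 gp_same //; have := Ha; lra.
  have hid := gp_id Hmet x (act gam x) (act (gam ^+ j.+2)%g x).
  have hl : gp x (act (gam ^+ j.+2)%g x) (act gam x) <= A + delta.
    rewrite -(gp_act Hact ((gam^-1) ^+ j.+2)%g) (actXK Hact).
    rewrite [X in gp _ _ X](actXr Hact) (actK Hact) gpC //.
    exact: (L1 Hmet Hact Hhyp Hd0 HAV HaV j).
  have := Ha; rewrite (dC Hmet x) in hid; lra.
rewrite gpC // in ha.
have hb' : A + delta + delta < gp (act gam x) (act (gam ^+ j.+1)%g x) x by lra.
have := hyp_small Hhyp ha hb'; rewrite gpC //; lra.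
Qed.
End Chain2.


Section Geo.
Context {R : realType} {X : Type} (d : X -> X -> R) (Hmet : is_metric d).
Variable delta : R.
Hypothesis Hhyp : hyperbolic d delta.
Hypothesis Hd0 : 0 <= delta.
Hypothesis Hgeod : geodesic_space d.
Local Notation gp := (gprod d).

Lemma geod_pt x y t : 0 <= t <= d x y ->
  exists z, d x z = t /\ d z y = d x y - t.
Proof.
move=> ht; have [g [g0 g1 gi]] := Hgeod x y.
exists (g t); split.
  rewrite -{1}g0 gi ?ht //; last by rewrite lexx dge0.
  by rewrite sub0r normrN ger0_norm //; case/andP: ht.
rewrite -{1}g1 gi ?ht //; last by rewrite lexx dge0.
by rewrite distrC ger0_norm // subr_ge0; case/andP: ht.
Qed.

Lemma gdist x y w : exists z, d x z + d z y = d x y /\ d w z <= gp x y w + 2 * delta.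
Proof.
have ht : 0 <= gp w y x <= d x y.
  by rewrite gp_ge0 //= gpC // (dC Hmet x y) gp_le.
have [z [hz1 hz2]] := geod_pt ht.
exists z; split; first by rewrite hz1 hz2; lra.
have h1 : gp w y x <= gp w y x by [].
have e1 := dC Hmet z x; have e2 := dC Hmet y x; have e3 := dC Hmet z y;
have e4 := dC Hmet w x; have e5 := dC Hmet y w; have e6 := dC Hmet z w.
have h2 : gp w y x <= gp y z x.
  by move: hz1 hz2; rewrite /gprod; lra.
have := hyp2 Hhyp h1 h2.
have := Hd0.
move: hz1 hz2; rewrite /gprod; lra.
Qed.

Lemma subS o e x x' m B :
  d o m + d m e = d o e -> d o x <= d o m -> d o m <= d o x' ->
  gp o e x <= B -> gp o e x' <= B -> gp x x' m <= 3 * B + 2 * delta.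
Proof.
move=> hm hx hx' hB1 hB2.
have c1 := dC Hmet o e; have c2 := dC Hmet o x; have c3 := dC Hmet o x'; have c4 := dC Hmet o m;
have c5 := dC Hmet e x; have c6 := dC Hmet e x'; have c7 := dC Hmet e m; have c8 := dC Hmet x x';
have c9 := dC Hmet x m; have c10 := dC Hmet x' m.
have B0 : 0 <= B by have := gp_ge0 Hmet o e x; lra.
have h1 : d o x - B <= gp x e o.
  by move: hB1; rewrite /gprod; lra.
have h2 : d o x - B <= gp e m o.
  by rewrite /gprod; lra.
have h3 := hyp2 Hhyp h1 h2.
have h4 : d e x' - 2 * B <= gp x' o e.
  by move: hB2; rewrite /gprod; lra.
have h5 : d e x' - 2 * B <= gp o m e.
  by move: hB2; rewrite /gprod; lra.
have h6 := hyp2 Hhyp h4 h5.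
have t1 := dtri Hmet o x' e; have t2 := dtri Hmet o x x'.
have := Hd0.
move: h3 h6 hB1 hB2; rewrite /gprod; lra.
Qed.

End Geo.

Lemma bracket {R : realType} (f : nat -> R) c N : (0 < N)%N -> f 0%N <= c -> c <= f N ->
  exists j, (j < N)%N /\ f j <= c /\ c <= f j.+1.
Proof.
elim: N => [//|N IH] _ h0 hN.
case: (posnP N) => [N0|Npos].
  by exists 0%N; subst N; split => //.
case: (lerP c (f N)) => hc.
  by have [j [jN hj]] := IH Npos h0 hc; exists j; split => //; apply: ltnW; rewrite ltnS.
by exists N; split => //; split => //; apply: ltW.
Qed.

Section Poly.
Context {R : realType} {X : Type} (d : X -> X -> R) (Hmet : is_metric d).
Context {G : groupType} (act : G -> X -> X) (Hact : isometric_action d act).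
Variable delta : R.
Hypothesis Hhyp : hyperbolic d delta.
Hypothesis Hd0 : 0 <= delta.
Hypothesis Hgeod : geodesic_space d.
Local Notation gp := (gprod d).

Variables (gam : G) (A : R) (x : X).
Hypothesis HA : gp (act gam^-1 x) (act gam x) x <= A.
Hypothesis Ha : 2 * A + 3 * delta < d (act gam x) x.

Lemma chain_end j b : (j <= b)%N ->
  gp x (act (gam ^+ b)%g x) (act (gam ^+ j)%g x) <= A + 2 * delta.
Proof.
move=> jb.
rewrite -(gp_act Hact ((gam^-1) ^+ j)%g) (actXK Hact).
rewrite -(subnKC jb) expgnDr (actM Hact) (actXK Hact).
exact: (L2 Hmet Hact Hhyp Hd0 HA Ha).
Qed.

Lemma polyline b m : (0 < b)%N ->
  d x m + d m (act (gam ^+ b)%g x) = d x (act (gam ^+ b)%g x) ->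
  exists z, d (act gam z) z <= d (act gam x) x /\
            d m z <= 3 * (A + 2 * delta) + 4 * delta.
Proof.
move=> b0 hm.
have hc0 : d x (act (gam ^+ 0)%g x) <= d x m.
  by rewrite expg0 (act1 Hact) d0 // dge0.
have hcN : d x m <= d x (act (gam ^+ b)%g x).
  by have := dge0 Hmet m (act (gam ^+ b)%g x); lra.
have [j [jb [hj1 hj2]]] := @bracket _ (fun j => d x (act (gam ^+ j)%g x)) (d x m) b b0 hc0 hcN.
simpl in hj1, hj2.
have e1 := chain_end (ltnW jb).
have e2 := chain_end jb.
have := subS Hmet Hhyp Hd0 hm hj1 hj2 e1 e2.
move=> hs.
have [z [hz1 hz2]] := gdist Hmet Hhyp Hd0 Hgeod (act (gam ^+ j)%g x) (act (gam ^+ j.+1)%g x) m.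
exists z; split; last by lra.
have t := dtri Hmet (act gam z) (act gam (act (gam ^+ j)%g x)) z.
rewrite (dact Hact) -(actX Hact) in t.
have := chain_d Hmet Hact gam x j; rewrite (dC Hmet z (act (gam ^+ j.+1)%g x)) in hz1.
rewrite (dC Hmet z (act (gam ^+ j)%g x)) in t; lra.
Qed.

End Poly.

Lemma ex_argmin {R : realType} (f : nat -> R) N :
  exists n, (n <= N)%N /\ forall m, (m <= N)%N -> f n <= f m.
Proof.
elim: N => [|N [n [nN hn]]].
  by exists 0%N; split => // m; rewrite leqn0 => /eqP ->.
case: (lerP (f n) (f N.+1)) => h.
  exists n; split; first by rewrite (leq_trans nN).
  move=> m; rewrite leq_eqVlt ltnS => /orP[/eqP->//|]; exact: hn.
exists N.+1; split => // m; rewrite leq_eqVlt ltnS => /orP[/eqP->//|/hn]; lra.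
Qed.

Section Near.
Context {R : realType} {X : Type} (d : X -> X -> R) (Hmet : is_metric d).
Context {G : groupType} (act : G -> X -> X) (Hact : isometric_action d act).
Variable delta : R.
Hypothesis Hhyp : hyperbolic d delta.
Hypothesis Hd0 : 0 <= delta.
Local Notation gp := (gprod d).

Lemma comm_act (a h : G) y : commute a h -> act a (act h y) = act h (act a y).
Proof. by move=> c; rewrite -!(actM Hact) c. Qed.

Lemma good_inv (gam h : G) y : commute gam h ->
  gp (act gam^-1 (act h y)) (act gam (act h y)) (act h y) = gp (act gam^-1 y) (act gam y) y /\
  d (act gam (act h y)) (act h y) = d (act gam y) y.
Proof.
move=> c; have cV : commute gam^-1 h.
  by apply/commute_sym; apply: commuteV; apply/commute_sym.
by rewrite (comm_act y c) (comm_act y cV) (gp_act Hact) (dact Hact).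
Qed.

Lemma near_case1 (gam : G) A x1 q :
  2 * A + 4 * delta < d (act gam x1) x1 ->
  gp q (act gam x1) x1 <= A + delta ->
  d q x1 <= d q (act gam^-1 x1) ->
  2 * d q x1 - 2 * A - 4 * delta <= d q (act gam q).
Proof.
move=> ha h1 h2.
have e1 : d (act gam q) x1 = d q (act gam^-1 x1).
  by rewrite -(dact Hact gam^-1) (actK Hact).
have e2 : d (act gam x1) (act gam q) = d x1 q by rewrite (dact Hact).
have hb : A + delta + delta < gp (act gam x1) (act gam q) x1.
  rewrite /gprod e1 e2 (dC Hmet x1 q); lra.
rewrite gpC // in h1.
have := hyp_small Hhyp h1 hb.
have f1 := dC Hmet q x1; have f2 := dC Hmet (act gam q) q.
rewrite /gprod; lra.
Qed.

Lemma near_bound (gam : G) A x1 q :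
  gp (act gam^-1 x1) (act gam x1) x1 <= A ->
  2 * A + 4 * delta < d (act gam x1) x1 ->
  d q x1 <= d q (act gam x1) -> d q x1 <= d q (act gam^-1 x1) ->
  2 * d q x1 <= d q (act gam q) + 2 * A + 4 * delta.
Proof.
move=> hA ha h1 h2.
case: (hyp_or Hhyp q hA) => h.
  have h' : gp q (act gam^-1 x1) x1 <= A + delta by rewrite gpC.
  have ha' : 2 * A + 4 * delta < d (act gam^-1 x1) x1 by rewrite (dactV Hmet Hact).
  have h1' : d q x1 <= d q (act gam^-1^-1 x1) by rewrite invgK.
  have := near_case1 ha' h' h1'.
  have -> : d q (act gam^-1 q) = d q (act gam q).
    by rewrite -(dact Hact gam) (actVK Hact) dC.
  lra.
have := near_case1 ha h h2; lra.
Qed.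

End Near.

Section Locmin.
Context {R : realType} {X : Type} (d : X -> X -> R) (Hmet : is_metric d).
Context {G : groupType} (act : G -> X -> X) (Hact : isometric_action d act).
Variables (gam : G) (T : R).
Hypothesis HT : 0 < T.
Hypothesis Hst : forall y n, (0 < n)%N -> T * n%:R <= d (act (gam ^+ n)%g y) y.

Lemma ex_locmin x0 q : exists h : G, commute gam h /\
  d q (act h x0) <= d q (act gam (act h x0)) /\ d q (act h x0) <= d q (act gam^-1 (act h x0)).
Proof.
set K := (Num.trunc (2 * d q x0 / T)).+1.
have hK := truncnS_gt (2 * d q x0 / T); rewrite -/K in hK.
have K0 : (0 < K)%N by [].
set x0' := act ((gam^-1) ^+ K)%g x0.
pose f n := d q (act (gam ^+ n)%g x0').
have fK : f K = d q x0 by rewrite /f /x0' (actXVK Hact).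
have TK : 2 * d q x0 < T * K%:R.
  by move: hK; rewrite ltr_pdivrMr // => h; lra.
have f0 : d q x0 < f 0%N.
  rewrite /f expg0 (act1 Hact).
  have := Hst x0' K0; rewrite /x0' (actXVK Hact) -/x0'.
  have := dtri Hmet x0 q x0'; rewrite (dC Hmet x0 q); lra.
have f2K : d q x0 < f (K + K)%N.
  rewrite /f expgnDr (actM Hact) /x0' (actXVK Hact).
  have := Hst x0 K0; have := dtri Hmet (act (gam ^+ K)%g x0) q x0.
  rewrite (dC Hmet (act (gam ^+ K)%g x0) q); lra.
have [n [nN hn]] := ex_argmin f (K + K).
have hnK := hn K (leq_addr _ _); rewrite fK in hnK.
have n0 : n != 0%N by apply/eqP => n0; subst n; lra.
have n2K : n != (K + K)%N by apply/eqP => nE; subst n; lra.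
have nlt : (n < K + K)%N by rewrite ltn_neqAle n2K nN.
exists ((gam ^+ n)%g * (gam^-1 ^+ K)%g)%g; split.
  apply: commuteM; first exact/commuteX/commute_refl.
  by apply/commuteX/commuteV/commute_refl.
rewrite (actM Hact) -/x0'; split.
  rewrite -(actX Hact); exact: (hn n.+1 nlt).
case: n n0 nlt hn hnK {nN n2K} => [//|n] _ nlt hn _.
rewrite [X in _ <= d q (act _ X)](actX Hact) (actK Hact).
by apply: hn; exact: ltnW (ltnW nlt).
Qed.

End Locmin.


Section Main.
Context {R : realType} {X : Type} (d : X -> X -> R) (Hmet : is_metric d).
Context {G : groupType} (act : G -> X -> X) (Hact : isometric_action d act).
Variable delta : R.
Hypothesis Hhyp : hyperbolic d delta.
Hypothesis Hdp : 0 < delta.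
Hypothesis Hgeod : geodesic_space d.
Variables (g : G) (p : X).
Hypothesis Hg : 1000 * delta < stable_len d act g p.
Local Notation gp := (gprod d).
Local Notation T := (stable_len d act g p).
Local Notation ell := (transl_len d act g).
Let Hd0 : 0 <= delta. Proof. exact: ltW. Qed.
Let eps := delta / 4.
Let Ab := eps / 2 + 2 * delta.

Lemma F1 x n : (0 < n)%N -> T * n%:R <= d (act (g ^+ n)%g x) x.
Proof. exact: stable_lb. Qed.

Lemma F1V x n : (0 < n)%N -> T * n%:R <= d (act ((g^-1) ^+ n)%g x) x.
Proof. by move=> n0; rewrite expVgn (dactV Hmet Hact); exact: F1. Qed.

Lemma F2 x : ell <= d (act g x) x.
Proof.
apply: ge_inf; last by exists x.
by exists 0 => _ [y _ <-]; exact: dge0.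
Qed.

Lemma F3 : T <= ell.
Proof.
apply: lb_le_inf; first by exists (d (act g p) p); exists p.
move=> _ [y _ <-]; have := F1 y (isT : (0 < 1)%N); rewrite expg1 mulr1 //.
Qed.

Lemma F4 : exists x0, gp (act g^-1 x0) (act g x0) x0 <= Ab /\ d (act g x0) x0 <= ell + eps.
Proof.
have hdp := Hdp. have e0 : 0 < eps by rewrite /eps; lra.
have [_ [x0 _ <-] hx0] : exists2 y, [set d (act g x) x | x in [set: X]] y & y < ell + eps.
  apply: inf_lt; first by exists (d (act g p) p); exists p.
  lra.
exists x0; split; last by lra.
set a := d (act g x0) x0.
have a0 : 0 <= a by exact: dge0.
have [m [hm1 hm2]] : exists m, d x0 m = a / 2 /\ d m (act g x0) = d x0 (act g x0) - a / 2.
  apply: geod_pt => //; rewrite (dC Hmet x0) -/a; apply/andP; split; lra.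
rewrite (dC Hmet x0) -/a in hm2.
have hmg := F2 m.
have T1 := F3.
rewrite -(gp_act Hact g) (actVK Hact).
set y := act g x0; set z := act g y.
have dyx : d y x0 = a by [].
have dzy : d z y = a by rewrite /z (dact Hact).
have dgmy : d (act g m) y = d m x0 by rewrite /y (dact Hact).
have dzgm : d z (act g m) = d y m by rewrite /z (dact Hact).
have c1 := dC Hmet m y; have c2 := dC Hmet x0 y; have c3 := dC Hmet m x0.
have c4 := dC Hmet z y; have c5 := dC Hmet (act g m) y; have c6 := dC Hmet z (act g m).
have c7 := dC Hmet m (act g m); have c8 := dC Hmet (act g m) m.
rewrite leNgt; apply/negP => hc.
set c := Num.min (gp x0 z y) (a / 2).
have hc1 : c <= gp m x0 y by rewrite /c ge_min; apply/orP; right; rewrite /gprod; lra.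
have hc2 : c <= gp x0 z y by rewrite /c ge_min lexx.
have hc3 : c <= gp z (act g m) y by rewrite /c ge_min; apply/orP; right; rewrite /gprod; lra.
have h := hyp3 Hhyp Hd0 hc1 hc2 hc3.
have hx0a := F2 x0; have hgg := Hg; have eE : eps = delta / 4 by [].
have hcb : eps / 2 + 2 * delta < c by rewrite /c lt_min hc /=; lra.
move: h; rewrite /gprod; lra.
Qed.

Definition adm (gam : G) :=
  [/\ forall x n, (0 < n)%N -> T * n%:R <= d (act (gam ^+ n)%g x) x,
      forall x, d (act gam x) x = d (act g x) x &
      exists x0, gp (act gam^-1 x0) (act gam x0) x0 <= Ab /\ d (act gam x0) x0 <= ell + eps].

Lemma adm_g : adm g.
Proof. split => //; [exact: F1 | exact: F4]. Qed.

Lemma adm_gV : adm g^-1.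
Proof.
split => //; first exact: F1V.
  by move=> x; rewrite (dactV Hmet Hact).
have [x0 [h1 h2]] := F4; exists x0; split.
  by rewrite invgK gpC.
by rewrite (dactV Hmet Hact).
Qed.

Lemma dTbig x gam : adm gam -> 1000 * delta < d (act gam x) x.
Proof.
case=> _ h _; rewrite h; have := F2 x; have := F3; have := Hg; lra.
Qed.

Lemma side gam w L : adm gam -> d (act w^-1 p) p <= L -> d (act g p) p <= L ->
  exists x1, [/\ gp (act gam^-1 x1) (act gam x1) x1 <= Ab, d (act gam x1) x1 <= ell + eps &
    2 * d (act w^-1 p) x1 <= 3 * L + 2 * Ab + 4 * delta].
Proof.
move=> ad hw hg.
have hdp := Hdp; have eE : eps = delta / 4 by []; have AE : Ab = eps / 2 + 2 * delta by [].
have [hst hdisp [x0 [hA0 ha0]]] := ad.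
have T0 : 0 < T by have := Hg; lra.
set q := act w^-1 p.
have [h [hc [l1 l2]]] := ex_locmin Hmet Hact T0 hst x0 q.
have [e1 e2] := good_inv Hact x0 hc.
exists (act h x0); split; [by rewrite e1 | by rewrite e2 |].
have big := dTbig (act h x0) ad.
have hA : gp (act gam^-1 (act h x0)) (act gam (act h x0)) (act h x0) <= Ab by rewrite e1.
have := near_bound Hmet Hact Hhyp hA _ l1 l2.
have hq : d q (act gam q) <= 3 * L.
  rewrite dC // hdisp.
  have := dtri Hmet (act g q) (act g p) q; have := dtri Hmet (act g p) p q.
  rewrite (dact Hact) (dC Hmet p q); lra.
move=> /(_ ltac:(lra)); lra.
Qed.

Lemma same_est gam w L b : adm gam -> d (act w^-1 p) p <= L -> d (act g p) p <= L ->
  gp (act w (act (gam ^+ b)%g (act w^-1 p))) (act w (act ((gam^-1) ^+ b)%g (act w^-1 p))) p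
    <= 3 * (3 * L + 2 * Ab + 4 * delta) / 2 + Ab + 2 * delta.
Proof.
move=> ad hw hg.
have hdp := Hdp; have eE : eps = delta / 4 by []; have AE : Ab = eps / 2 + 2 * delta by [].
have [x1 [hA ha hD]] := side ad hw hg.
have big := dTbig x1 ad.
rewrite -[X in gp _ _ X](actVK Hact w p) (gp_act Hact).
set q := act w^-1 p.
have l1 := gp_lipl Hmet (act (gam ^+ b)%g q) (act (gam ^+ b)%g x1) (act ((gam^-1) ^+ b)%g q) q.
have l2 := gp_lipl Hmet (act ((gam^-1) ^+ b)%g q) (act ((gam^-1) ^+ b)%g x1) (act (gam ^+ b)%g x1) q.
have l3 := gp_lipz Hmet (act (gam ^+ b)%g x1) (act ((gam^-1) ^+ b)%g x1) q x1.
have hL2 := L2 Hmet Hact Hhyp Hd0 hA (ltac:(lra) : 2 * Ab + 3 * delta < d (act gam x1) x1) b b.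
rewrite !(dact Hact) in l1 l2.
rewrite (gpC Hmet (act ((gam^-1) ^+ b)%g q)) (gpC Hmet (act ((gam^-1) ^+ b)%g x1)) in l2.
rewrite (gpC Hmet (act ((gam^-1) ^+ b)%g x1)) in hL2.
lra.
Qed.

Lemma eps_le : eps <= 8 * delta.
Proof. have := Hdp; rewrite /eps; lra. Qed.

Lemma half_itv (x : R) : 0 <= x -> 0 <= x / 2 <= x.
Proof. move=> h; apply/andP; split; lra. Qed.

Lemma dtrans w y z : d (act w^-1 y) z = d y (act w z).
Proof. by rewrite -(dact Hact w) (actVK Hact). Qed.

Lemma dtrans' w y z : d (act w y) z = d y (act w^-1 z).
Proof. by rewrite -(dact Hact w^-1) (actK Hact). Qed.

Lemma poly_tr gam w x1 b m : adm gam -> (0 < b)%N ->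
  gp (act gam^-1 x1) (act gam x1) x1 <= Ab -> d (act gam x1) x1 <= ell + eps ->
  d (act w x1) m + d m (act w (act (gam ^+ b)%g x1)) = d (act w x1) (act w (act (gam ^+ b)%g x1)) ->
  exists z0, d (act g z0) z0 <= ell + eps /\ d m (act w z0) <= 3 * (Ab + 2 * delta) + 4 * delta.
Proof.
move=> ad b0 hA ha hm.
have hdp := Hdp; have eE : eps = delta / 4 by []; have AE : Ab = eps / 2 + 2 * delta by [].
have big := dTbig x1 ad.
have hm' : d x1 (act w^-1 m) + d (act w^-1 m) (act (gam ^+ b)%g x1) = d x1 (act (gam ^+ b)%g x1).
  have e1 : d x1 (act w^-1 m) = d (act w x1) m by rewrite -(dact Hact w) (actVK Hact).
  have e2 := dtrans w m (act (gam ^+ b)%g x1).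
  have e3 := dact Hact w x1 (act (gam ^+ b)%g x1).
  lra.
have [z0 [hz1 hz2]] := polyline Hmet Hact Hhyp Hd0 Hgeod hA (ltac:(lra) : 2 * Ab + 3 * delta < d (act gam x1) x1) b0 hm'.
exists z0; split.
  by case: ad => _ e _; rewrite -e; lra.
by rewrite -dtrans.
Qed.

Local Notation Ax := (nbhd d (axis d act delta g) (20 * delta)).

Lemma diff_est gam1 gam2 u v L Dl b :
  adm gam1 -> adm gam2 ->
  d (act u^-1 p) p <= L -> d (act v^-1 p) p <= L -> d (act g p) p <= L ->
  (0 < b)%N -> 0 <= Dl ->
  (forall c1 c2, (act u @` Ax `&` act v @` Ax) c1 -> (act u @` Ax `&` act v @` Ax) c2 ->
     d c1 c2 <= Dl) ->
  Dl + 5 * L + 54 * delta + (3 * L + 2 * Ab + 4 * delta) / 2 <= T * b%:R ->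
  gp (act u (act (gam1 ^+ b)%g (act u^-1 p))) (act v (act (gam2 ^+ b)%g (act v^-1 p))) p
    < Dl + 5 * L + 54 * delta.
Proof.
move=> ad1 ad2 hu hv hg b0 Dl0 hDl hbT.
have hdp := Hdp; have eE : eps = delta / 4 by []; have AE : Ab = eps / 2 + 2 * delta by [].
have LT : T <= L by have := F1 p (isT : (0 < 1)%N); rewrite expg1 mulr1; lra.
have hgg := Hg.
have [x1u [hAu hau hDu]] := side ad1 hu hg.
have [x1v [hAv hav hDv]] := side ad2 hv hg.
set qu := act u^-1 p in hDu; set qv := act v^-1 p in hDv.
set Du := d qu x1u in hDu; set Dv := d qv x1v in hDv.
have Du0 : 0 <= Du by exact: dge0.
have Dv0 : 0 <= Dv by exact: dge0.
set ou := act u x1u; set Yu := act u (act (gam1 ^+ b)%g x1u).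
set ov := act v x1v; set Yv := act v (act (gam2 ^+ b)%g x1v).
set s1 := act u (act (gam1 ^+ b)%g qu); set s2 := act v (act (gam2 ^+ b)%g qv).
have dpou : d p ou = Du by rewrite /ou -dtrans.
have dpov : d p ov = Dv by rewrite /ov -dtrans.
have ds1 : d s1 Yu = Du by rewrite /s1 /Yu !(dact Hact).
have ds2 : d s2 Yv = Dv by rewrite /s2 /Yv !(dact Hact).
have ds1p : T * b%:R <= d s1 p.
  rewrite /s1 dtrans' -/qu; by case: ad1 => h _ _; apply: h.
have ds2p : T * b%:R <= d s2 p.
  rewrite /s2 dtrans' -/qv; by case: ad2 => h _ _; apply: h.
set M := Dl + 5 * L + 54 * delta.
have ME : M = Dl + 5 * L + 54 * delta by [].
rewrite ltNge; apply/negP => hG.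
have k1 : M <= gp Yu s1 p.
  have l := gp_lipl Hmet s1 Yu s1 p; rewrite gp_same // in l; have e := dC Hmet s1 Yu.
  clear -l e ds1 ds1p hbT hDu ME AE eE hdp; lra.
have h1 := hyp2 Hhyp k1 hG.
have k2 : M - delta <= gp s2 Yv p.
  have l := gp_lipl Hmet s2 Yv s2 p; rewrite gp_same // (gpC Hmet Yv) in l.
  clear -l ds2 ds2p hbT hDv ME AE eE hdp; lra.
have h2 := hyp2 Hhyp h1 k2.
have h3 := gp_lipz Hmet Yu Yv p ou.
set G' := gp Yu Yv ou in h3.
have hGu : G' <= d ou Yu by rewrite /G' (dC Hmet ou Yu); exact: gp_le.
have hGv : G' <= d ou Yv by rewrite /G' (gpC Hmet Yu) (dC Hmet ou Yv); exact: gp_le.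
have [gu [gu0 gu1 gui]] := Hgeod ou Yu.
have [gv [gv0 gv1 gvi]] := Hgeod ou Yv.
set r1 := Du + Dv + 2 * delta.
set r2 := r1 + Dl + 75 * delta.
have r1E : r1 = Du + Dv + 2 * delta by [].
have r2E : r2 = r1 + Dl + 75 * delta by [].
have r12 : r2 <= G' by clear -h2 h3 dpou hDu hDv LT hgg ME r1E r2E AE eE hdp; lra.
have pt : forall r, r1 <= r -> r <= G' -> exists c,
    (act u @` Ax `&` act v @` Ax) c /\ d c (gu r) <= 37 * delta.
  move=> r hr1 hr2.
  have r0 : 0 <= r by clear -hr1 r1E Du0 Dv0 hdp; lra.
  have hru : 0 <= r <= d ou Yu by rewrite r0 /=; clear -hr2 hGu; lra.
  have hrv : 0 <= r <= d ou Yv by rewrite r0 /=; clear -hr2 hGv; lra.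
  have hu0 : (0:R) <= 0 <= d ou Yu by apply/andP; split => //; exact: dge0.
  have hv0 : (0:R) <= 0 <= d ou Yv by apply/andP; split => //; exact: dge0.
  have hu1 : 0 <= d ou Yu <= d ou Yu by apply/andP; split => //; exact: dge0.
  have hv1 : 0 <= d ou Yv <= d ou Yv by apply/andP; split => //; exact: dge0.
  set w := gu r; set m' := gv r.
  have dw1 : d ou w = r by rewrite /w -{1}gu0 gui // sub0r normrN ger0_norm.
  have dw2 : d w Yu = d ou Yu - r by rewrite /w -{1}gu1 gui // distrC ger0_norm // subr_ge0; case/andP: hru.
  have dm1 : d ou m' = r by rewrite /m' -{1}gv0 gvi // sub0r normrN ger0_norm.
  have dm2 : d m' Yv = d ou Yv - r by rewrite /m' -{1}gv1 gvi // distrC ger0_norm // subr_ge0; case/andP: hrv.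
  have t1 : r <= gp w Yu ou.
    have aa := dC Hmet w ou; have bb := dC Hmet Yu ou; rewrite /gprod; clear -aa bb dw1 dw2; lra.
  have t3 : r <= gp Yv m' ou.
    have aa := dC Hmet m' ou; have bb := dC Hmet Yv ou; have cc := dC Hmet Yv m'.
    rewrite /gprod; clear -aa bb cc dm1 dm2; lra.
  have t := hyp3 Hhyp Hd0 t1 hr2 t3.
  have dwm : d w m' <= 4 * delta.
    move: t; rewrite /gprod => t; have aa := dC Hmet w ou; have bb := dC Hmet m' ou.
    clear -t aa bb dw1 dm1; lra.
  (* m' close to [ov, Yv] *)
  have douov : d ou ov <= Du + Dv.
    have aa := dtri Hmet ou p ov; have bb := dC Hmet ou p; clear -aa bb dpou dpov; lra.
  have s0 : gp ou Yv m' <= 0.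
    have aa := dC Hmet ou m'; have bb := dC Hmet Yv m'; rewrite /gprod; clear -aa bb dm1 dm2; lra.
  have s1' : 0 + delta < gp ou ov m'.
    have aa := gp_lb Hmet ou ov m'; clear -aa dm1 douov hr1 r1E hdp; lra.
  have s2' := hyp_small Hhyp s0 s1'.
  have [mv [hmv1 hmv2]] := gdist Hmet Hhyp Hd0 Hgeod ov Yv m'.
  have [z0v [hz0v1 hz0v2]] := poly_tr ad2 b0 hAv hav hmv1.
  have hbu : d ou w + d w Yu = d ou Yu by clear -dw1 dw2; lra.
  have [z0u [hz0u1 hz0u2]] := poly_tr ad1 b0 hAu hau hbu.
  set zu := act u z0u in hz0u2; set zv := act v z0v in hz0v2.
  have dzz : d zu zv <= 40 * delta.
    have q1 := dtri Hmet zu w zv; have q2 := dtri Hmet w m' zv; have q3 := dtri Hmet m' mv zv.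
    have e1 := dC Hmet zu w.
    clear -q1 q2 q3 e1 hz0u2 dwm hmv2 s2' hz0v2 AE eE hdp; lra.
  have hmid : 0 <= d zu zv / 2 <= d zu zv.
    exact: half_itv (dge0 Hmet zu zv).
  have [c [hc1 hc2]] := geod_pt Hmet Hgeod hmid.
  exists c; split; last first.
    have tt := dtri Hmet c zu w; have e := dC Hmet c zu; have e' := dC Hmet zu w.
    clear -tt e e' hc1 hz0u2 dzz AE eE hdp; lra.
  have ax : forall (w0 : G) z0 zz, zz = act w0 z0 -> d (act g z0) z0 <= ell + eps ->
      d c zz <= 20 * delta -> (act w0 @` Ax) c.
    move=> w0 z0 zz -> hz hcz; exists (act w0^-1 c); last exact: (actVK Hact).
    exists z0; last by rewrite dtrans.
    rewrite /axis /=; apply: (le_trans hz); rewrite lerD2l; exact: eps_le.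
  split.
    apply: (ax u z0u zu) => //; rewrite (dC Hmet c zu); clear -hc1 dzz hdp; lra.
  apply: (ax v z0v zv) => //; clear -hc2 dzz hdp; lra.
have r1le : r1 <= r2 by rewrite r2E; clear -Dl0 hdp; lra.
have [c1 [hc1 hd1]] := pt r1 (lexx _) (le_trans r1le r12).
have [c2 [hc2 hd2]] := pt r2 r1le r12.
have hD12 := hDl c1 c2 hc1 hc2.
have r10 : 0 <= r1 by rewrite r1E; clear -Du0 Dv0 hdp; lra.
have hr1 : 0 <= r1 <= d ou Yu by rewrite r10 /=; apply: le_trans r1le (le_trans r12 hGu).
have hr2 : 0 <= r2 <= d ou Yu by rewrite (le_trans r10 r1le) /=; apply: le_trans r12 hGu.
have e12 := gui r1 r2 hr1 hr2.
rewrite distrC ger0_norm ?subr_ge0 // in e12.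
have q1 := dtri Hmet (gu r1) c1 (gu r2); have q2 := dtri Hmet c1 c2 (gu r2).
have q3 := dC Hmet (gu r1) c1.
clear -e12 q1 q2 q3 hd1 hd2 hD12 r2E hdp; lra.
Qed.

End Main.


Lemma finite_ub {R : realType} (E : set R) : finite_set E -> has_ubound E.
Proof.
move=> fE; exists (\big[Order.max/0]_(x <- (finmap.enum_fset (fset_set E))) x) => y Ey.
have yin : y \in finmap.enum_fset (fset_set E).
  have h := in_fset_set fE y; rewrite mem_set // in h; exact: h.
exact: (le_bigmax_seq 0 y xpredT (fun x => x) yin isT).
Qed.

Lemma Lmax_ub {R : realType} {X : Type} (d : X -> X -> R) {G : groupType} (act : G -> X -> X)
  (U : set G) p u : finite_set U -> U u -> d (act u p) p <= Lmax d act U p.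
Proof.
move=> fU Uu; apply: sup_upper_bound; last by exists u.
split; first by exists (d (act u p) p); exists u.
by apply: finite_ub; apply: finite_image.
Qed.

Lemma Delta_fin {R : realType} (D : \bar R) (c K b : R) :
  (0 <= D)%E -> 0 < c -> (c%:E * (D + K%:E) <= b%:E)%E ->
  exists Dl, [/\ D = Dl%:E, 0 <= Dl & c * (Dl + K) <= b].
Proof.
move=> D0 c0; case: D D0 => [r| |] //= D0.
  by rewrite -EFinD -EFinM lee_fin => h; exists r; split => //; rewrite -lee_fin.
rewrite addye // mulry gtr0_sg // mul1e.
by rewrite leye_eq.
Qed.

Lemma spow_mulr {G : groupType} (U : set G) (g : G) n k x :
  U g -> spow U n x -> spow U (n + k) (x * g ^+ k)%g.
Proof.
move=> Ug; elim: k => [|k IH] hx; first by rewrite addn0 expg0 mulg1.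
rewrite addnS /=; exists (x * g ^+ k)%g, g; split => //; first exact: IH.
by rewrite expgSr mulgA.
Qed.

Lemma spow_conj {G : groupType} (U : set G) (g u : G) b :
  symmetric_set U -> U g -> U u -> spow U b.+2 (u * g ^+ b * u^-1)%g.
Proof.
move=> sym Ug Uu.
have h1 : spow U 1 u by exists 1%g, u; split => //; rewrite mul1g.
have h2 := spow_mulr b Ug h1.
by exists (u * g ^+ b)%g, u^-1%g; split => //; apply: sym.
Qed.


Section Core.
Context {R : realType} {X : Type} (d : X -> X -> R) (Hmet : is_metric d).
Context {G : groupType} (act : G -> X -> X) (Hact : isometric_action d act).
Variable delta : R.
Hypothesis Hhyp : hyperbolic d delta.
Hypothesis Hdp : 0 < delta.
Hypothesis Hgeod : geodesic_space d.
Variables (g : G) (p : X).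
Hypothesis Hg : 1000 * delta < stable_len d act g p.
Variables (U Ug : set G) (alpha L Dl : R) (b : nat).
Hypothesis HUsym : symmetric_set U.
Hypothesis HgU : U g.
Hypothesis HUg : reps_of d act g U Ug.
Hypothesis hLu : forall u, U u -> d (act u p) p <= L.
Hypothesis Halpha : 0 <= alpha.
Hypothesis Dl0 : 0 <= Dl.
Hypothesis hDl : forall u v, ~ equiv_g d act g u v -> forall c1 c2,
  (act u @` nbhd d (axis d act delta g) (20 * delta) `&` act v @` nbhd d (axis d act delta g) (20 * delta)) c1 ->
  (act u @` nbhd d (axis d act delta g) (20 * delta) `&` act v @` nbhd d (axis d act delta g) (20 * delta)) c2 ->
  d c1 c2 <= Dl.
Hypothesis hbT : 2 * (Dl + (5 * L + 104 * delta + alpha)) <= stable_len d act g p * b%:R.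

Local Notation T := (stable_len d act g p).
Local Notation gp := (gprod d).

Definition gm (s : bool) := if s then g else g^-1%g.
Definition Pt w s := act w (act (gm s ^+ b)%g (act w^-1 p)).

Lemma adm_s s : adm d act delta g p (gm s).
Proof. by case: s; [exact: adm_g | exact: adm_gV]. Qed.

Lemma hw w : Ug w -> d (act w^-1 p) p <= L.
Proof. by move=> Uw; apply: hLu; apply: HUsym; case: HUg => + _ _; apply. Qed.

Lemma LT : T <= L.
Proof.
have := F1 Hmet Hact g p p (isT : (0 < 1)%N); rewrite expg1 mulr1.
have := hLu HgU; lra.
Qed.

Lemma b0 : (0 < b)%N.
Proof.
rewrite lt0n; apply/eqP => b0; move: hbT; rewrite b0 mulr0.
have := LT; have := Hg; have := Hdp; have := Dl0; have := Halpha; lra.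
Qed.

Lemma dPt w s : T * b%:R <= d (Pt w s) p.
Proof.
rewrite /Pt (dtrans' Hact); case: (adm_s s) => h _ _; apply: h; exact: b0.
Qed.

Lemma core w1 s1 w2 s2 : Ug w1 -> Ug w2 -> (w1, s1) <> (w2, s2) ->
  gp (Pt w1 s1) (Pt w2 s2) p < Num.min (d (Pt w1 s1) p) (d (Pt w2 s2) p) / 2 - alpha - 50 * delta.
Proof.
move=> U1 U2 neq.
have hdp := Hdp; have hl := LT; have hgg := Hg; have hal := Halpha; have hd := Dl0; have hb := hbT.
have hmin : T * b%:R <= Num.min (d (Pt w1 s1) p) (d (Pt w2 s2) p).
  by rewrite le_min !dPt.
have hg : d (act g p) p <= L by apply: hLu.
suff : gp (Pt w1 s1) (Pt w2 s2) p < Dl + 5 * L + 54 * delta by lra.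
case: (eqVneq w1 w2) => [e|ne].
  subst w2.
  have ns : s2 = ~~ s1 by move: neq; clear; case: s1; case: s2.
  have hs : gm s2 = (gm s1)^-1%g by rewrite ns; clear; case: s1 => //=; rewrite invgK.
  have := same_est Hmet Hact Hhyp Hdp Hg b (adm_s s1) (hw U1) hg.
  rewrite /Pt hs.
  lra.
have neqv : ~ equiv_g d act g w1 w2.
  by move=> eqv; apply: (negP ne); apply/eqP; case: HUg => _ _; apply.
have := diff_est Hmet Hact Hhyp Hdp Hgeod Hg (adm_s s1) (adm_s s2) (hw U1) (hw U2) hg b0 Dl0 (hDl neqv).
by apply; lra.
Qed.

End Core.

Section Lab.
Context {R : realType} {X : Type} (d : X -> X -> R).
Context {G : groupType} (act : G -> X -> X) (Hact : isometric_action d act).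
Variables (g : G) (p : X) (b : nat).

Definition xw (w : G) := (w * g ^+ b * w^-1)%g.
Definition El w (s : bool) := if s then xw w else (xw w)^-1%g.

Lemma act_El w s : act (El w s) p = act w (act (gm g s ^+ b)%g (act w^-1 p)).
Proof.
case: s; first by rewrite /El /xw /gm !(actM Hact).
rewrite /El /gm.
set y := act w (act ((g^-1) ^+ b)%g (act w^-1 p)).
have : act (xw w) y = p.
  rewrite /xw /y !(actM Hact) (actK Hact) (actXVK Hact) (actVK Hact) //.
by move=> <-; rewrite (actK Hact).
Qed.

Lemma lab (Ug : set G) u :
  ([set xw w | w in Ug] `|` [set v | [set xw w | w in Ug] (v^-1)%g]) u ->
  exists w s, Ug w /\ u = El w s.
Proof.
case=> [[w Uw <-]|[w Uw e]]; first by exists w, true.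
by exists w, false; split => //; rewrite /El e invgK.
Qed.

End Lab.

Unset Implicit Arguments.

Theorem mainTheorem12 (R : realType) (X : Type) (d : X -> X -> R)
  (G : groupType) (act : G -> X -> X) (delta kappa : R) (N : nat)
  (Hmet : is_metric d) (Hgeod : geodesic_space d) (Hhyp : hyperbolic d delta)
  (Hact : isometric_action d act) (Hacyl : acylindrical d act delta kappa N)
  (Hdelta : 0 < delta) (Hkappa : delta <= kappa)
  (alpha : R) (Halpha : 3 * delta <= alpha)
  (U : set G) (HUfin : finite_set U) (HUsym : symmetric_set U)
  (g : G) (HgU : U g) (Hlox : loxodromic d act g)
  (p : X) (Hg : 1000 * delta < stable_len d act g p)
  (Ug : set G) (HUg : reps_of d act g U Ug)
  (b : nat)
  (Hb : ((2 / stable_len d act g p)%:E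
          * (Delta d act delta g + (5 * Lmax d act U p + 104 * delta + alpha)%:E)
         <= (b%:R)%:E)%E) :
  let S := [set (u * g ^+ b * u^-1)%g | u in Ug] in
  [/\ S `<=` spow U b.+2, (S #= Ug)%card & reduced d act delta alpha p S].

Proof.
move=> S.
set L := Lmax d act U p.
have hLu : forall u, U u -> d (act u p) p <= L by move=> u; exact: Lmax_ub HUfin.
have T0 : 0 < stable_len d act g p by lra.
have D0 : (0 <= Delta d act delta g)%E by apply: ereal_sup_ubound; left.
have c0 : 0 < 2 / stable_len d act g p by rewrite divr_gt0.
have [Dl [DE Dl0 hDl2]] := Delta_fin D0 c0 Hb.
have hbT : 2 * (Dl + (5 * L + 104 * delta + alpha)) <= stable_len d act g p * b%:R.
  move: hDl2; rewrite mulrAC ler_pdivrMr // => h.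
  by rewrite [X in _ <= X]mulrC.
have hDl : forall u v, ~ equiv_g d act g u v -> forall c1 c2,
  (act u @` nbhd d (axis d act delta g) (20 * delta) `&` act v @` nbhd d (axis d act delta g) (20 * delta)) c1 ->
  (act u @` nbhd d (axis d act delta g) (20 * delta) `&` act v @` nbhd d (axis d act delta g) (20 * delta)) c2 ->
  d c1 c2 <= Dl.
  move=> u v nuv c1 c2 h1 h2.
  rewrite -lee_fin -DE; apply: le_trans; last first.
    by apply: ereal_sup_ubound; right; exists u, v; split.
  by apply: ereal_sup_ubound; right; exists c1, c2; split.
have Hal : 0 <= alpha by lra.
have hcore := core Hmet Hact Hhyp Hdelta Hgeod Hg HUsym HgU HUg hLu Hal Dl0 hDl hbT.
have hsub : Ug `<=` U by case: HUg.
have eqS : S = [set xw g b w | w in Ug] by [].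
have Pge0 : forall x, 0 <= d x p by move=> x; exact: dge0.
have nope : forall w1 s1 w2 s2, Ug w1 -> Ug w2 -> (w1, s1) <> (w2, s2) ->
    El g b w1 s1 = El g b w2 s2 -> False.
  move=> w1 s1 w2 s2 U1 U2 ne e.
  have := hcore w1 s1 w2 s2 U1 U2 ne.
  rewrite /Pt -!(act_El Hact) e gp_same // minxx.
  have := Pge0 (act (El g b w2 s2) p); have := Hdelta; lra.
split.
- by move=> _ [u Uu <-]; apply: spow_conj => //; apply: hsub.
- apply: inj_card_eq => u1 u2 /set_mem U1 /set_mem U2 e.
  case: (eqVneq u1 u2) => // ne; exfalso.
  apply: (nope u1 true u2 true U1 U2) => //.
  by case=> e'; move: ne; rewrite e' eqxx.
split.
- by apply: finite_image; apply: sub_finite_set HUfin.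
- apply/seteqP; split => // x [[w1 U1 e1] [w2 U2 e2]].
  apply: (nope w1 true w2 false U1 U2) => //.
  by rewrite /El /xw e1 e2 invgK.
move=> u1 u2 h1 h2 ne.
have [w1 [s1 [U1 eu1]]] := lab h1.
have [w2 [s2 [U2 eu2]]] := lab h2.
have ne' : (w1, s1) <> (w2, s2).
  by move=> [e1 e2]; apply: ne; rewrite eu1 eu2 e1 e2.
rewrite eu1 eu2.
have := hcore w1 s1 w2 s2 U1 U2 ne'.
by rewrite /Pt -!(act_El Hact).
Qed.
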